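(* Let $G$ be a finite group, let $H$ be a normal subgroup of $G$, and let $M$ be a subgroup with $H\leq M\leq G$. Let $C\subseteq G\setminus H$ be a union of some cosets of $H$ in $G$, and let $S_M,T_M$ be subsets of $M\setminus\{1\}$ such that $S_M^\alpha=T_M$ for some $\alpha\in\mathrm{Aut}(M)$ which fixes (setwise) every coset of $H$ in $M$. Put $S=C\cup S_M$ and $T=C\cup T_M$. Then $\mathrm{Cay}(G,S)\cong\mathrm{Cay}(G,T)$.
   Context: For a group $G$ and a subset $S\subseteq G$ with $1\notin S$, the Cayley digraph $\mathrm{Cay}(G,S)$ has vertex set $G$ and arc set $\{(g,sg)\mid g\in G,\ s\in S\}$. Isomorphism means digraph isomorphism. *)

(* Defs.v *)
From mathcomp Require Import all_boot all_fingroup.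
Set Implicit Arguments. Unset Strict Implicit. Unset Printing Implicit Defensive.
Import GroupScope.
Local Open Scope group_scope.

(* Cayley digraph Cay(G,S): vertex set G, arcs (g, s g), s in S.
   So (g,h) is an arc iff h * g^-1 \in S. *)
Definition cay_arc (gT : finGroupType) (S : {set gT}) (g h : gT) : bool :=
  h * g^-1 \in S.

Definition cay_iso (gT : finGroupType) (G S T : {set gT}) : Prop :=
  exists f : gT -> gT,
    [/\ {in G &, injective f}, f @: G = G &
        {in G &, forall g h, cay_arc S g h = cay_arc T (f g) (f h)}].

(* Main.v *)
Require Import Defs.
From mathcomp Require Import all_boot all_fingroup.
Import GroupScope.
Local Open Scope group_scope.

Theorem lemma3p1 (gT : finGroupType) (G H M : {group gT})
  (C SM TM : {set gT}) (alpha : {perm gT}) :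
  H <| G -> H \subset M -> M \subset G ->
  (exists2 P : {set {set gT}}, P \subset rcosets H G & C = cover P) ->
  C \subset G :\: H ->
  SM \subset M :\ 1 -> TM \subset M :\ 1 ->
  alpha \in Aut M ->
  {in M, forall x, alpha x \in H :* x} ->
  alpha @: SM = TM ->
  cay_iso G (C :|: SM) (C :|: TM).
Proof.
move=> nHG sHM sMG [P sPR defC] _ sSM sTM autA aH defT.
have amor := morphicP (Aut_morphic autA).
have aM := Aut_closed autA.
pose r x := repr (M :* x).
pose f x := alpha (x * (r x)^-1) * r x.
have hr x : x * (r x)^-1 \in M.
  by rewrite -mem_rcoset /r rcoset_repr rcoset_refl.
have hMf x : M :* f x = M :* x.
  rewrite -(rcoset_repr M x); apply/rcoset_eqP.
  by rewrite mem_rcoset /f mulgK aM.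
have finj : injective f.
  move=> x y efxy.
  have ery : r x = r y by rewrite /r -(hMf x) efxy hMf.
  move: efxy; rewrite /f ery => /mulIg /perm_inj /mulIg //.
have hfG x : x \in G -> f x \in G.
  move=> xG; have : r x \in M :* x by exact: mem_repr_rcoset.
  rewrite mem_rcoset => rxM.
  have rG : r x \in G.
    by rewrite -(mulgKV x (r x)) groupM // (subsetP sMG).
  by rewrite groupM // (subsetP sMG) // aM.
have hC u v : v \in H :* u -> u \in C -> v \in C.
  move=> vu; rewrite defC => /bigcupP [B BP uB]; apply/bigcupP; exists B => //.
  move/subsetP: sPR => /(_ B BP) /rcosetsP [x _ dB].
  rewrite dB in uB *; move/rcoset_eqP: uB => <-; exact: vu.
have hsym u v : v \in H :* u -> u \in H :* v.
  by move/rcoset_eqP => e; rewrite e rcoset_refl.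
exists f; split.
- by move=> x y _ _; apply: finj.
- apply/eqP; rewrite eqEcard card_in_imset; last by move=> x y _ _; apply: finj.
  rewrite leqnn andbT; apply/subsetP=> y /imsetP [x xG ->]; exact: hfG.
move=> g h gG hG; rewrite /cay_arc.
set z := h * g^-1; set z' := f h * (f g)^-1.
have zG : z \in G by rewrite groupM ?groupV.
have hz : z' \in H :* z.
  have /rcosetP [a aH1 ea] := aH _ (hr h).
  have /rcosetP [b bH1 eb] := aH _ (hr g).
  have -> : z' = a * z * b^-1.
    by rewrite /z' /f ea eb -[a * _ * _]mulgA mulgKV -[b * _ * _]mulgA mulgKV invMg /z !mulgA.
  rewrite mem_rcoset -mulgA -mulgA groupM //.
  have -> : z * (b^-1 * z^-1) = b^-1 ^ z^-1 by rewrite conjgE invgK mulgA.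
  by rewrite memJ_norm ?groupV // (subsetP (normal_norm nHG)) // groupV.
have hzM : (z' \in M) = (z \in M).
  have /rcosetP [k kH ->] := hz.
  by rewrite groupMl // (subsetP sHM).
have hzA : z \in M -> z' = alpha z.
  move=> zM.
  have erg : r h = r g.
    by rewrite /r; congr repr; apply/rcoset_eqP; rewrite mem_rcoset.
  have ez : h * (r h)^-1 = z * (g * (r g)^-1) by rewrite erg /z !mulgA mulgKV.
  by rewrite /z' /f ez amor ?hr // erg invMg !mulgA !mulgK.
rewrite !in_setU; congr (_ || _).
  apply/idP/idP; first exact: hC.
  by move=> /(hC _ _ (hsym _ _ hz)).
case zM : (z \in M).
  by rewrite hzA // -defT mem_imset //; exact: perm_inj.
apply/idP/idP => [zS|zT].
  by move: (subsetP sSM _ zS); rewrite !inE zM andbF.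
by move: (subsetP sTM _ zT); rewrite !inE hzM zM andbF.
Qed.
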